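(* Let $p_1,p_2\in\mathbb{R}^3$ be distinct points and let $\pi_1,\pi_2\subset\mathbb{R}^3$ be two distinct affine $2$-planes, both containing $p_1$ and $p_2$ and neither passing through the origin $O$. For $p_3\in\pi_1\setminus\pi_2$ and $p_4\in\pi_2\setminus\pi_1$ set \[ \omega(p_1,p_2;p_3,p_4)=\frac{\det(p_2-p_1,\,p_3-p_1,\,p_4-p_1)}{\det(p_1,p_2,p_3)\,\det(p_1,p_2,p_4)} . \] Then the value $\omega(p_1,p_2;p_3,p_4)$ does not depend on the choice of $p_3\in\pi_1\setminus\pi_2$ and $p_4\in\pi_2\setminus\pi_1$.
   Context: Points of $\mathbb{R}^3$ are identified with their coordinate vectors, and $\det(u,v,w)$ denotes the determinant of the $3\times 3$ matrix with columns $u,v,w$. For points $p_1,p_2,p_3,p_4$ such that ${\rm span}(p_1,p_2,p_3)$ and ${\rm span}(p_1,p_2,p_4)$ (minimal affine subspaces containing the points) are $2$-dimensional and do not contain $O$, the quantity $\omega(p_1,p_2;p_3,p_4)$ above is called the projective lifting coefficient on $p_1p_2$ induced by these two planes. *)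

(* Defs.v *)
From mathcomp Require Import all_boot all_order all_algebra.
Set Implicit Arguments. Unset Strict Implicit. Unset Printing Implicit Defensive.
Import Order.TTheory GRing.Theory Num.Theory.
Local Open Scope ring_scope.

Definition det3 (R : comNzRingType) (u v w : 'rV[R]_3) : R :=
  \det (\matrix_(i < 3, j < 3)
          (if j == 0 :> nat then u 0 i
           else if j == 1 :> nat then v 0 i else w 0 i)).

Definition dot3 (R : comNzRingType) (n x : 'rV[R]_3) : R := \sum_(i < 3) n 0 i * x 0 i.

(* The affine 2-plane { x | n . x = c } (an affine 2-plane when n != 0). *)
Definition plane (R : comNzRingType) (n : 'rV[R]_3) (c : R) (x : 'rV[R]_3) : Prop :=
  dot3 n x = c.

Definition omega (R : fieldType) (p1 p2 p3 p4 : 'rV[R]_3) : R :=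
  det3 (p2 - p1) (p3 - p1) (p4 - p1) / (det3 p1 p2 p3 * det3 p1 p2 p4).

(* Main.v *)
Require Import Defs.
From mathcomp Require Import all_boot all_order all_algebra.
From mathcomp Require Import ring lra.
Import Order.TTheory GRing.Theory Num.Theory.
Local Open Scope ring_scope.
Set Implicit Arguments. Unset Strict Implicit.

Lemma det3E (R : comNzRingType) (u v w : 'rV[R]_3) :
  det3 u v w = u 0 0 * (v 0 1 * w 0 2 - v 0 2 * w 0 1)
             - v 0 0 * (u 0 1 * w 0 2 - u 0 2 * w 0 1)
             + w 0 0 * (u 0 1 * v 0 2 - u 0 2 * v 0 1).
Proof.
rewrite /det3 (expand_det_row _ 0) !big_ord_recl big_ord0 /cofactor.
rewrite !(expand_det_row _ 0) !big_ord_recl !big_ord0 /cofactor.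
rewrite !det_mx11 !mxE /=.
have -> : lift 0 0 = 1 :> 'I_3 by apply/val_inj.
have -> : lift 0 (lift 0 0) = 2 :> 'I_3 by apply/val_inj.
rewrite /bump /=; ring.
Qed.
Lemma dot3E (R : comNzRingType) (u v : 'rV[R]_3) :
  dot3 u v = u 0 0 * v 0 0 + u 0 1 * v 0 1 + u 0 2 * v 0 2.
Proof.
rewrite /dot3 !big_ord_recl big_ord0.
have -> : lift 0 0 = 1 :> 'I_3 by apply/val_inj.
have -> : lift 0 (lift 0 0) = 2 :> 'I_3 by apply/val_inj.
by rewrite addr0 addrA.
Qed.

Lemma ord3 (i : 'I_3) : i = 0 \/ i = 1 \/ i = 2.
Proof.
case: i => [[|[|[|k]]] Hk]; [left|right;left|right;right|] => //; apply/val_inj => //.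
Qed.

Lemma rv3_eq0 (R : comNzRingType) (u : 'rV[R]_3) :
  u 0 0 = 0 -> u 0 1 = 0 -> u 0 2 = 0 -> u = 0.
Proof.
move=> h0 h1 h2; apply/rowP => i; rewrite mxE.
by case: (ord3 i) => [->|[->|->]].
Qed.

Lemma par (R : fieldType) (A0 A1 A2 B0 B1 B2 W0 W1 W2 : R) :
  A0*W0 + A1*W1 + A2*W2 = 0 -> B0*W0+B1*W1+B2*W2 = 0 ->
  let M0 := A1*B2 - A2*B1 in let M1 := A2*B0 - A0*B2 in let M2 := A0*B1 - A1*B0 in
  let N := M0^+2+M1^+2+M2^+2 in let D := W0*M0+W1*M1+W2*M2 in
  [/\ N*W0 = D*M0, N*W1 = D*M1 & N*W2 = D*M2].
Proof.
move=> hA hB M0 M1 M2 N D.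
split; apply/eqP; rewrite -subr_eq0; apply/eqP.
- transitivity ((B0*W0+B1*W1+B2*W2)*(M1*A2 - M2*A1) - (A0*W0 + A1*W1 + A2*W2)*(M1*B2 - M2*B1)).
    rewrite /D /N /M0 /M1 /M2; ring.
  by rewrite hA hB; ring.
- transitivity ((B0*W0+B1*W1+B2*W2)*(M2*A0 - M0*A2) - (A0*W0 + A1*W1 + A2*W2)*(M2*B0 - M0*B2)).
    rewrite /D /N /M0 /M1 /M2; ring.
  by rewrite hA hB; ring.
- transitivity ((B0*W0+B1*W1+B2*W2)*(M0*A1 - M1*A0) - (A0*W0 + A1*W1 + A2*W2)*(M0*B1 - M1*B0)).
    rewrite /D /N /M0 /M1 /M2; ring.
  by rewrite hA hB; ring.
Qed.

Definition crN {R : comNzRingType} (n1 n2 : 'rV[R]_3) : R :=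
  (n1 0 1 * n2 0 2 - n1 0 2 * n2 0 1)^+2 + (n1 0 2 * n2 0 0 - n1 0 0 * n2 0 2)^+2
  + (n1 0 0 * n2 0 1 - n1 0 1 * n2 0 0)^+2.

Lemma sum3sq0 (R : realFieldType) (x y z : R) : x^+2 + y^+2 + z^+2 = 0 ->
  [/\ x = 0, y = 0 & z = 0].
Proof.
move/eqP; rewrite paddr_eq0 ?addr_ge0 ?sqr_ge0 // paddr_eq0 ?sqr_ge0 // !sqrf_eq0.
by move=> /andP[/andP[/eqP -> /eqP ->] /eqP ->].
Qed.

Lemma cross_nz (R : realFieldType) (a n1 n2 : 'rV[R]_3) c1 c2 :
  n1 != 0 -> n2 != 0 -> plane n1 c1 a -> plane n2 c2 a ->
  (exists z, ~ (plane n1 c1 z <-> plane n2 c2 z)) -> crN n1 n2 != 0.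
Proof.
move=> hn1 hn2 ha1 ha2 [z hz]; apply/eqP => /sum3sq0 [m0 m1 m2].
set P := n1 0 0 ^+ 2 + n1 0 1 ^+ 2 + n1 0 2 ^+ 2.
have hP : P != 0.
  apply/eqP => /sum3sq0 [h0 h1 h2]; move/eqP: hn1; apply.
  by apply: rv3_eq0; rewrite ?h0 ?h1 ?h2 ?expf_eq0.
set Q := dot3 n1 n2.
set k := Q / P.
have e0 : n2 0 0 = k * n1 0 0.
  apply: (mulfI hP); rewrite /k mulrA mulrCA divff // mulr1.
  apply/eqP; rewrite -subr_eq0; apply/eqP.
  transitivity ((n1 0 2 * n2 0 0 - n1 0 0 * n2 0 2) * n1 0 2 - (n1 0 0 * n2 0 1 - n1 0 1 * n2 0 0) * n1 0 1).
    by rewrite /P /Q dot3E; ring.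
  by rewrite m1 m2; ring.
have e1 : n2 0 1 = k * n1 0 1.
  apply: (mulfI hP); rewrite /k mulrA mulrCA divff // mulr1.
  apply/eqP; rewrite -subr_eq0; apply/eqP.
  transitivity ((n1 0 0 * n2 0 1 - n1 0 1 * n2 0 0) * n1 0 0 - (n1 0 1 * n2 0 2 - n1 0 2 * n2 0 1) * n1 0 2).
    by rewrite /P /Q dot3E; ring.
  by rewrite m0 m2; ring.
have e2 : n2 0 2 = k * n1 0 2.
  apply: (mulfI hP); rewrite /k mulrA mulrCA divff // mulr1.
  apply/eqP; rewrite -subr_eq0; apply/eqP.
  transitivity ((n1 0 1 * n2 0 2 - n1 0 2 * n2 0 1) * n1 0 1 - (n1 0 2 * n2 0 0 - n1 0 0 * n2 0 2) * n1 0 0).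
    by rewrite /P /Q dot3E; ring.
  by rewrite m0 m1; ring.
have hk : k != 0.
  apply/eqP => k0; move/eqP: hn2; apply.
  by apply: rv3_eq0; rewrite ?e0 ?e1 ?e2 k0 mul0r.
have hd : forall y, dot3 n2 y = k * dot3 n1 y.
  by move=> y; rewrite !dot3E e0 e1 e2; ring.
have hc : c2 = k * c1 by rewrite -ha2 -ha1 hd.
apply: hz; rewrite /plane hd hc; split; first by move->.
by move/(mulfI hk).
Qed.
Lemma key (R : realFieldType) (a b n1 n2 x x' : 'rV[R]_3) c1 c2 :
  a != b -> n1 != 0 -> n2 != 0 ->
  (exists z, ~ (plane n1 c1 z <-> plane n2 c2 z)) ->
  plane n1 c1 a -> plane n1 c1 b -> plane n2 c2 a -> plane n2 c2 b ->
  plane n1 c1 x -> ~ plane n2 c2 x -> plane n1 c1 x' -> ~ plane n2 c2 x' ->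
  exists (l mu : R), l != 0 /\
    forall i, x' 0 i = a 0 i + l * (x 0 i - a 0 i) + mu * (b 0 i - a 0 i).
Proof.
move=> hab hn1 hn2 hz ha1 hb1 ha2 hb2 hx1 hx2 hy1 hy2.
have hN := cross_nz hn1 hn2 ha1 ha2 hz.
set s := dot3 n2 x - c2; set s' := dot3 n2 x' - c2.
have hs : s != 0 by rewrite subr_eq0; apply/eqP.
have hs' : s' != 0 by rewrite subr_eq0; apply/eqP.
set l := s' / s.
have hl : l != 0 by rewrite mulf_neq0 ?invr_eq0.
have dA : n1 0 0 * (b 0 0 - a 0 0) + n1 0 1 * (b 0 1 - a 0 1) + n1 0 2 * (b 0 2 - a 0 2) = 0.
  transitivity (dot3 n1 b - dot3 n1 a); first by rewrite !dot3E; ring.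
  by rewrite hb1 ha1 subrr.
have dB : n2 0 0 * (b 0 0 - a 0 0) + n2 0 1 * (b 0 1 - a 0 1) + n2 0 2 * (b 0 2 - a 0 2) = 0.
  transitivity (dot3 n2 b - dot3 n2 a); first by rewrite !dot3E; ring.
  by rewrite hb2 ha2 subrr.
have wA : n1 0 0 * (x' 0 0 - a 0 0 - l * (x 0 0 - a 0 0)) + n1 0 1 * (x' 0 1 - a 0 1 - l * (x 0 1 - a 0 1)) + n1 0 2 * (x' 0 2 - a 0 2 - l * (x 0 2 - a 0 2)) = 0.
  transitivity (dot3 n1 x' - dot3 n1 a - l * (dot3 n1 x - dot3 n1 a)); first by rewrite !dot3E; ring.
  by rewrite hy1 hx1 ha1 !subrr mulr0 subrr.
have wB : n2 0 0 * (x' 0 0 - a 0 0 - l * (x 0 0 - a 0 0)) + n2 0 1 * (x' 0 1 - a 0 1 - l * (x 0 1 - a 0 1)) + n2 0 2 * (x' 0 2 - a 0 2 - l * (x 0 2 - a 0 2)) = 0.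
  transitivity (dot3 n2 x' - dot3 n2 a - l * (dot3 n2 x - dot3 n2 a)); first by rewrite !dot3E; ring.
  by rewrite ha2 -/s -/s' /l divfK // subrr.
have /= [d0 d1 d2] := par dA dB.
have /= [w0 w1 w2] := par wA wB.
rewrite /crN in hN.
set Dd := (b 0 0 - a 0 0) * _ + _ + _ in d0 d1 d2.
set Dw := (x' 0 0 - a 0 0 - l * _) * _ + _ + _ in w0 w1 w2.
have hDd : Dd != 0.
  apply/eqP => D0; move/eqP: hab; apply; apply/eqP; rewrite eq_sym -subr_eq0; apply/eqP.
  apply: rv3_eq0; rewrite !mxE; apply: (mulfI hN).
  - by rewrite d0 D0 !mul0r mulr0.
  - by rewrite d1 D0 !mul0r mulr0.
  - by rewrite d2 D0 !mul0r mulr0.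
exists l, (Dw / Dd); split => // i.
suff : x' 0 i - a 0 i - l * (x 0 i - a 0 i) = Dw / Dd * (b 0 i - a 0 i).
  by move=> h; rewrite -h; ring.
apply: (mulfI hN).
case: (ord3 i) => [->|[->|->]].
- by rewrite w0 mulrCA d0 mulrA divfK.
- by rewrite w1 mulrCA d1 mulrA divfK.
- by rewrite w2 mulrCA d2 mulrA divfK.
Qed.

Theorem proposition2p2 (R : realFieldType) (p1 p2 : 'rV[R]_3)
  (n1 n2 : 'rV[R]_3) (c1 c2 : R) :
  p1 != p2 ->
  n1 != 0 -> n2 != 0 ->
  (* the two planes are distinct *)
  (exists x, ~ (plane n1 c1 x <-> plane n2 c2 x)) ->
  (* both contain p1 and p2 *)
  plane n1 c1 p1 -> plane n1 c1 p2 -> plane n2 c2 p1 -> plane n2 c2 p2 ->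
  (* neither passes through the origin *)
  ~ plane n1 c1 0 -> ~ plane n2 c2 0 ->
  forall p3 p4 q3 q4 : 'rV[R]_3,
    plane n1 c1 p3 -> ~ plane n2 c2 p3 ->
    plane n2 c2 p4 -> ~ plane n1 c1 p4 ->
    plane n1 c1 q3 -> ~ plane n2 c2 q3 ->
    plane n2 c2 q4 -> ~ plane n1 c1 q4 ->
    omega p1 p2 p3 p4 = omega p1 p2 q3 q4.
Proof.
move=> h12 hn1 hn2 hz ha1 hb1 ha2 hb2 _ _ p3 p4 q3 q4 h31 h32 h42 h41 h31' h32' h42' h41'.
have [l [mu [hl E3]]] := key h12 hn1 hn2 hz ha1 hb1 ha2 hb2 h31 h32 h31' h32'.
have hz' : exists z, ~ (plane n2 c2 z <-> plane n1 c1 z).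
  by case: hz => z hz; exists z => h; apply: hz; split => /h.
have [l' [mu' [hl' E4]]] := key h12 hn2 hn1 hz' ha2 hb2 ha1 hb1 h42 h41 h42' h41'.
rewrite /omega.
have hX : det3 (p2 - p1) (q3 - p1) (q4 - p1) = (l * l') * det3 (p2 - p1) (p3 - p1) (p4 - p1).
  rewrite !det3E !mxE !E3 !E4. ring.
have hY : det3 p1 p2 q3 = l * det3 p1 p2 p3 by rewrite !det3E !E3; ring.
have hZ : det3 p1 p2 q4 = l' * det3 p1 p2 p4 by rewrite !det3E !E4; ring.
rewrite hX hY hZ.
have -> : l * det3 p1 p2 p3 * (l' * det3 p1 p2 p4) = (l * l') * (det3 p1 p2 p3 * det3 p1 p2 p4) by ring.
by rewrite -mulf_div divff ?mul1r // mulf_neq0.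
Qed.
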